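(* For a restless bandit as in the context, every stationary policy $u$, every $S\subseteq N^{\{0,1\}}$ and every $i\in N$, $$v^S_i+\sum_{j\in S}c^S_j\,x^{0,u}_{ij}=v^u_i+\sum_{j\in N^{\{0,1\}}\setminus S}c^S_j\,x^{1,u}_{ij}.$$
   Context: Restless bandit: finite state space $N=N^{\{0,1\}}\cup N^{\{1\}}$ (disjoint); actions $a\in\{0,1\}$; one-period costs $h^a_i$; transition probabilities $p^a_{ij}$, with $p^1_{ij}=p^0_{ij}$ and $h^1_i=h^0_i$ for $i\in N^{\{1\}}$ (no effective choice there); discount factor $\beta\in(0,1)$. Stationary policies $u:N\to[0,1]$ (probability of active action) with $u(i)=1$ on $N^{\{1\}}$. $v^u_i=E^u_i[\sum_{t\ge0}h^{a(t)}_{X(t)}\beta^t]$, $x^{a,u}_{ij}=E^u_i[\sum_{t\ge0}1\{X(t)=j,a(t)=a\}\beta^t]$. For $S\subseteq N^{\{0,1\}}$ the $S$-active policy is active on $S\cup N^{\{1\}}$ and passive elsewhere; $v^S_i$ its cost measure. Marginal costs: $c^S_i=h^0_i-h^1_i+\beta\sum_{j\in N}(p^0_{ij}-p^1_{ij})v^S_j$. *)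

(* Defs.v *)
From HB Require Import structures.
From mathcomp Require Import all_boot all_order all_algebra.
From mathcomp Require Import all_classical all_reals all_analysis.
Set Implicit Arguments. Unset Strict Implicit. Unset Printing Implicit Defensive.
Import Order.TTheory GRing.Theory Num.Theory.
Local Open Scope ring_scope.

Section Bandit.
Context {R : realType} {T : finType}.

Definition infsum (f : nat -> R) : R := limn (fun n => \sum_(0 <= t < n) f t).

(* One-step transition kernel under the stationary randomized policy u
   (u i = probability of choosing the active action 1 in state i). *)
Definition Ppol (p0 p1 : T -> T -> R) (u : T -> R) (i j : T) : R :=
  (1 - u i) * p0 i j + u i * p1 i j.

Fixpoint Pstep (p0 p1 : T -> T -> R) (u : T -> R) (t : nat) (i j : T) : R :=
  match t with
  | 0%N => (i == j)%:R
  | t'.+1 => \sum_(k : T) Pstep p0 p1 u t' i k * Ppol p0 p1 u k j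
  end.

Definition actprob (u : T -> R) (a : bool) (j : T) : R :=
  if a then u j else 1 - u j.

(* v^u_i = E^u_i [ sum_t h^{a(t)}_{X(t)} beta^t ] *)
Definition vcost (p0 p1 : T -> T -> R) (h0 h1 : T -> R) (beta : R)
  (u : T -> R) (i : T) : R :=
  infsum (fun t => beta ^+ t *
    \sum_(j : T) Pstep p0 p1 u t i j * (actprob u false j * h0 j + actprob u true j * h1 j)).

(* x^{a,u}_{ij} = E^u_i [ sum_t 1{X(t)=j, a(t)=a} beta^t ] *)
Definition xmeas (p0 p1 : T -> T -> R) (beta : R) (a : bool)
  (u : T -> R) (i j : T) : R :=
  infsum (fun t => beta ^+ t * (Pstep p0 p1 u t i j * actprob u a j)).

Definition Sactive (N1 S : {set T}) (j : T) : R :=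
  if (j \in S) || (j \in N1) then 1 else 0.

Definition mcost (p0 p1 : T -> T -> R) (h0 h1 : T -> R) (beta : R)
  (N1 S : {set T}) (i : T) : R :=
  h0 i - h1 i + beta * \sum_(j : T) (p0 i j - p1 i j) * vcost p0 p1 h0 h1 beta (Sactive N1 S) j.

End Bandit.

(* Main.v *)
Require Import Defs.
From HB Require Import structures.
From mathcomp Require Import all_boot all_order all_algebra.
From mathcomp Require Import all_classical all_reals all_analysis.
From mathcomp Require Import ring lra.
Import Order.TTheory GRing.Theory Num.Theory.
Import numFieldNormedType.Exports.
Local Open Scope classical_set_scope.
Local Open Scope ring_scope.

Lemma cvg_sumT {R : realType} {T : finType} (a : T -> nat -> R) (l : T -> R) :
  (forall j, a j n @[n --> \oo] --> l j) -> \sum_j a j n @[n --> \oo] --> \sum_j l j.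
Proof.
move=> H.
suff HH : forall s : seq T, \sum_(j <- s) a j n @[n --> \oo] --> \sum_(j <- s) l j by exact: HH.
elim=> [|x s IH].
  have -> : (fun n => \sum_(j <- [::]) a j n) = fun=> 0 by apply: funext => n; rewrite big_nil.
  rewrite big_nil; exact: cvg_cst.
have -> : (fun n => \sum_(j <- x :: s) a j n) = (a x + fun n => \sum_(j <- s) a j n).
  by apply: funext => n /=; rewrite big_cons.
rewrite big_cons; apply: cvgD => //.
Qed.

Section Aux.
Context {R : realType} {T : finType}.
Variables (p0 p1 : T -> T -> R) (w : T -> R) (beta : R).
Hypothesis Kge0 : forall i j, 0 <= Ppol p0 p1 w i j.
Hypothesis Ksum : forall i, \sum_j Ppol p0 p1 w i j = 1.
Hypothesis b0 : 0 < beta.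
Hypothesis b1 : beta < 1.

Local Notation K := (Ppol p0 p1 w).
Local Notation P := (Pstep p0 p1 w).

Lemma sum_delta (i : T) (F : T -> R) : \sum_j (i == j)%:R * F j = F i.
Proof.
rewrite (bigD1 i) //= eqxx mul1r big1 ?addr0 // => k /negbTE.
by rewrite eq_sym => ->; rewrite mul0r.
Qed.

Lemma sum_delta' (i : T) (F : T -> R) : \sum_j F j * (j == i)%:R = F i.
Proof.
rewrite (bigD1 i) //= eqxx mulr1 big1 ?addr0 // => k /negbTE ->.
by rewrite mulr0.
Qed.

Lemma Pstep_ge0 t i j : 0 <= P t i j.
Proof.
elim: t i j => [|t IH] i j /=; first by rewrite ler0n.
by apply: sumr_ge0 => k _; apply: mulr_ge0.
Qed.

Lemma Pstep_sum1 t i : \sum_j P t i j = 1.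
Proof.
elim: t i => [|t IH] i /=.
  by rewrite (bigD1 i) //= eqxx big1 ?addr0 // => k /negbTE; rewrite eq_sym => ->.
rewrite exchange_big /= -[RHS](IH i); apply: eq_bigr => k _.
by rewrite -mulr_sumr Ksum mulr1.
Qed.

Lemma Pstep_le1 t i j : P t i j <= 1.
Proof.
rewrite -(Pstep_sum1 t i) (bigD1 j) //= lerDl.
by apply: sumr_ge0 => k _; apply: Pstep_ge0.
Qed.

Lemma PstepSl t i j : P t.+1 i j = \sum_k K i k * P t k j.
Proof.
elim: t i j => [|t IH] i j.
  rewrite /= sum_delta.
  by under eq_bigr => k _ do rewrite /=; rewrite sum_delta'.
have -> : P t.+2 i j = \sum_k P t.+1 i k * K k j by [].
under eq_bigr => k _ do rewrite IH mulr_suml.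
rewrite exchange_big /=; apply: eq_bigr => l _.
by rewrite mulr_sumr; apply: eq_bigr => k _; rewrite mulrA.
Qed.


Definition G (f : T -> R) (i : T) :=
  infsum (fun t => beta ^+ t * \sum_j P t i j * f j).

Lemma cvg_bound (a : nat -> R) M : (forall t, `|a t| <= M * beta ^+ t) -> cvgn (series a).
Proof.
move=> H; apply: normed_cvg.
apply: (@series_le_cvg _ _ (geometric M beta)).
- by move=> n; rewrite normr_ge0.
- by move=> n /=; exact: le_trans (normr_ge0 _) (H n).
- exact: H.
- by apply: is_cvg_geometric_series; rewrite ger0_norm ?(ltW b0).
Qed.

Lemma G_cvg f i : cvgn (series (fun t => beta ^+ t * \sum_j P t i j * f j)).
Proof.
refine (@cvg_bound _ (\sum_j `|f j|) _) => t.
rewrite normrM ger0_norm ?exprn_ge0 ?(ltW b0) // (mulrC _ (beta ^+ t)) ler_pM2l ?exprn_gt0 //.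
apply: le_trans (ler_norm_sum _ _ _) _; apply: ler_sum => j _.
rewrite normrM ger0_norm ?Pstep_ge0 //.
by rewrite -[X in (_ <= X)%R]mul1r; apply: ler_wpM2r; [exact: normr_ge0 | exact: Pstep_le1].
Qed.

Lemma xterm_cvg i j c : cvgn (series (fun t => beta ^+ t * (P t i j * c))).
Proof.
refine (@cvg_bound _ `|c| _) => t.
rewrite normrM ger0_norm ?exprn_ge0 ?(ltW b0) // [X in (_ <= X)%R]mulrC ler_pM2l ?exprn_gt0 //.
rewrite normrM ger0_norm ?Pstep_ge0 //.
by rewrite -[X in (_ <= X)%R]mul1r; apply: ler_wpM2r; [exact: normr_ge0 | exact: Pstep_le1].
Qed.


Lemma G_bellman f i : G f i = f i + beta * \sum_k K i k * G f k.
Proof.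
have Hs : forall n, series (fun t => beta ^+ t * \sum_j P t i j * f j) n.+1
   = f i + beta * \sum_k K i k * series (fun t => beta ^+ t * \sum_j P t k j * f j) n.
  move=> n; rewrite /series /= big_nat_recl //= expr0 mul1r sum_delta; congr (_ + _).
  rewrite [RHS]mulr_sumr.
  under [RHS]eq_bigr => k _ do rewrite mulr_sumr mulr_sumr.
  rewrite [RHS]exchange_big; apply: eq_bigr => t _.
  rewrite (eq_bigr (fun j => (\sum_k K i k * P t k j) * f j)); last first.
    by move=> j _; congr (_ * _); exact: PstepSl.
  under eq_bigr => j _ do rewrite mulr_suml.
  rewrite exchange_big /= mulr_sumr; apply: eq_bigr => k _.
  rewrite !mulr_sumr; apply: eq_bigr => j _; rewrite exprS; ring.
rewrite /G /infsum; apply: cvg_lim => //.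
rewrite -cvg_shiftS.
have -> : [sequence series (fun t => beta ^+ t * \sum_j P t i j * f j) n.+1]_n
  = fun n => f i + beta * \sum_k K i k * series (fun t => beta ^+ t * \sum_j P t k j * f j) n.
  by apply: funext => n; exact: Hs.
apply: cvgD; first exact: cvg_cst.
apply: cvgMl_tmp; apply: cvg_sumT => k; apply: cvgMl_tmp; exact: G_cvg.
Qed.

Lemma G_tele v i : G (fun j => v j - beta * \sum_k K j k * v k) i = v i.
Proof.
have Hs : forall n, \sum_(0 <= t < n) (beta ^+ t * \sum_j P t i j * (v j - beta * \sum_k K j k * v k))
   = v i - beta ^+ n * \sum_j P n i j * v j.
  elim=> [|n IH].
    by rewrite big_geq // expr0 mul1r sum_delta subrr.
  rewrite big_nat_recr //= IH.
  have -> : \sum_j P n.+1 i j * v j = \sum_j P n i j * \sum_k K j k * v k.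
    rewrite /=; under eq_bigr => j _ do rewrite mulr_suml.
    rewrite exchange_big /=; apply: eq_bigr => j _; rewrite mulr_sumr.
    by apply: eq_bigr => k _; rewrite mulrA.
  have -> : \sum_j P n i j * (v j - beta * \sum_k K j k * v k)
     = \sum_j P n i j * v j - beta * \sum_j P n i j * \sum_k K j k * v k.
    rewrite mulr_sumr -sumrB; apply: eq_bigr => j _; ring.
  rewrite exprS; ring.
rewrite /G /infsum; apply: cvg_lim => //.
have -> : (fun n => \sum_(0 <= t < n) (beta ^+ t * \sum_j P t i j * (v j - beta * \sum_k K j k * v k)))
   = fun n => v i - \sum_j (beta ^+ n * P n i j) * v j.
  apply: funext => n; rewrite Hs mulr_sumr; congr (_ - _).
  by apply: eq_bigr => j _; rewrite mulrA.
rewrite -[X in _ --> X]subr0.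
apply: cvgB; first exact: cvg_cst.
have H : \sum_j (beta ^+ n * P n i j) * v j @[n --> \oo] --> \sum_j 0 * v j.
  apply: cvg_sumT => j; apply: cvgMr_tmp.
  apply: (@squeeze_cvgr _ _ _ _ (fun=> 0) (GRing.exp beta)); last 2 first.
  - exact: cvg_cst.
  - by apply: cvg_expr; rewrite ger0_norm ?(ltW b0).
  near=> n; apply/andP; split.
    by apply: mulr_ge0; [apply: exprn_ge0; exact: ltW | exact: Pstep_ge0].
  rewrite -[X in (_ <= X)%R]mulr1; apply: ler_wpM2l; [apply: exprn_ge0; exact: ltW | exact: Pstep_le1].
rewrite big1 in H; last by move=> j _; rewrite mul0r.
exact: H.
Unshelve. all: by end_near.
Qed.

Lemma G_B f g i : G (fun j => f j - g j) i = G f i - G g i.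
Proof.
rewrite /G /infsum; apply: cvg_lim => //.
have -> : (fun n => \sum_(0 <= t < n) (beta ^+ t * \sum_j P t i j * (f j - g j)))
  = fun n => \sum_(0 <= t < n) (beta ^+ t * \sum_j P t i j * f j)
           - \sum_(0 <= t < n) (beta ^+ t * \sum_j P t i j * g j).
  apply: funext => n.
  rewrite -sumrB; apply: eq_bigr => t _; rewrite -mulrBr -sumrB; congr (_ * _).
  by apply: eq_bigr => j _; rewrite mulrBr.
apply: cvgB; exact: G_cvg.
Qed.

Lemma G_x (A : {set T}) c d i :
  \sum_(j in A) c j * infsum (fun t => beta ^+ t * (P t i j * d j))
  = G (fun j => if j \in A then c j * d j else 0) i.
Proof.
symmetry; rewrite /G /infsum; apply: cvg_lim => //.
have -> : (fun n => \sum_(0 <= t < n) (beta ^+ t * \sum_j P t i j * (if j \in A then c j * d j else 0)))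
   = fun n => \sum_j (if j \in A then c j * series (fun t => beta ^+ t * (P t i j * d j)) n else 0).
  apply: funext => n; rewrite /series /=.
  under eq_bigr => t _ do rewrite mulr_sumr.
  rewrite exchange_big /=; apply: eq_bigr => j _.
  case: ifP => _; last by rewrite big1 // => t _; rewrite !mulr0.
  by rewrite mulr_sumr; apply: eq_bigr => t _; ring.
rewrite big_mkcond /=; apply: cvg_sumT => j.
case: (j \in A); last exact: cvg_cst.
apply: cvgMl_tmp; exact: xterm_cvg.
Qed.

End Aux.

Lemma Ppol_ok {R : realType} {T : finType} (p0 p1 : T -> T -> R) (w : T -> R) :
  (forall i j, 0 <= p0 i j) -> (forall i j, 0 <= p1 i j) ->
  (forall i, \sum_j p0 i j = 1) -> (forall i, \sum_j p1 i j = 1) ->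
  (forall i, 0 <= w i) -> (forall i, w i <= 1) ->
  (forall i j, 0 <= Ppol p0 p1 w i j) /\ (forall i, \sum_j Ppol p0 p1 w i j = 1).
Proof.
move=> h0 h1 s0 s1 w0 w1; split.
  move=> i j; rewrite /Ppol; apply: addr_ge0; apply: mulr_ge0 => //.
  by rewrite subr_ge0.
move=> i; rewrite /Ppol big_split /= -!mulr_sumr s0 s1; ring.
Qed.

Theorem proposition6 (R : realType) (T : finType)
  (N1 : {set T})                      (* N^{1}; N^{0,1} = ~: N1 *)
  (h0 h1 : T -> R) (p0 p1 : T -> T -> R) (beta : R)
  (p0_ge0 : forall i j, 0 <= p0 i j) (p1_ge0 : forall i j, 0 <= p1 i j)
  (p0_sum1 : forall i, \sum_(j : T) p0 i j = 1)
  (p1_sum1 : forall i, \sum_(j : T) p1 i j = 1)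
  (hN1 : forall i, i \in N1 -> h1 i = h0 i)
  (pN1 : forall i j, i \in N1 -> p1 i j = p0 i j)
  (beta_gt0 : 0 < beta) (beta_lt1 : beta < 1)
  (u : T -> R) (u_ge0 : forall i, 0 <= u i) (u_le1 : forall i, u i <= 1)
  (uN1 : forall i, i \in N1 -> u i = 1)
  (S : {set T}) (HS : S \subset ~: N1) (i : T) :
  vcost p0 p1 h0 h1 beta (Sactive N1 S) i
    + \sum_(j in S) mcost p0 p1 h0 h1 beta N1 S j * xmeas p0 p1 beta false u i j
  = vcost p0 p1 h0 h1 beta u i
    + \sum_(j in ~: N1 :\: S) mcost p0 p1 h0 h1 beta N1 S j * xmeas p0 p1 beta true u i j.
Proof.
set w := Sactive N1 S.
have w0 : forall j, 0 <= w j by move=> j; rewrite /w /Sactive; case: ifP.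
have w1 : forall j, w j <= 1 by move=> j; rewrite /w /Sactive; case: ifP.
have [KSge0 KSsum] := Ppol_ok _ _ _ p0_ge0 p1_ge0 p0_sum1 p1_sum1 w0 w1.
have [Kuge0 Kusum] := Ppol_ok _ _ _ p0_ge0 p1_ge0 p0_sum1 p1_sum1 u_ge0 u_le1.
set v := vcost p0 p1 h0 h1 beta w.
set c := mcost p0 p1 h0 h1 beta N1 S.
set ru := fun j => actprob u false j * h0 j + actprob u true j * h1 j.
set g1 := fun j => if j \in S then c j * actprob u false j else 0.
set g2 := fun j => if j \in ~: N1 :\: S then c j * actprob u true j else 0.
have Hb : forall j, v j = (actprob w false j * h0 j + actprob w true j * h1 j)
                + beta * \sum_k Ppol p0 p1 w j k * v k.
  by move=> j; exact: (G_bellman _ _ _ _ KSge0 KSsum beta_gt0 beta_lt1).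
have Hsum : forall (z : T -> R) j, \sum_k Ppol p0 p1 z j k * v k
     = (1 - z j) * (\sum_k p0 j k * v k) + z j * (\sum_k p1 j k * v k).
  move=> z j; rewrite /Ppol.
  under eq_bigr => k _ do rewrite mulrDl -!mulrA.
  by rewrite big_split /= -!mulr_sumr.
have E : forall j, v j - beta * \sum_k Ppol p0 p1 u j k * v k = ru j - (g1 j - g2 j).
  move=> j.
  have Hc : c j = h0 j - h1 j + beta * (\sum_k p0 j k * v k - \sum_k p1 j k * v k).
    by rewrite /c /mcost; under eq_bigr => k _ do rewrite mulrBl; rewrite sumrB.
  have Hbj := Hb j; rewrite Hsum in Hbj.
  rewrite Hsum /g1 /g2 /ru /actprob finset.in_setD finset.in_setC Hbj.
  rewrite /actprob /w /Sactive in Hbj *.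
  move: Hc; set A0 := \sum_k p0 j k * v k; set A1 := \sum_k p1 j k * v k => Hc.
  case jN1: (j \in N1).
    have jS : (j \in S) = false.
      by apply/negP => /(fintype.subsetP HS); rewrite finset.in_setC jN1.
    have eA : A1 = A0 by rewrite /A1 /A0; apply: eq_bigr => k _; rewrite pN1.
    rewrite jS /= uN1 // hN1 // eA; ring.
  case jS: (j \in S) => /=; rewrite Hc; ring.
have Hv : v i = G p0 p1 u beta (fun j => ru j - (g1 j - g2 j)) i.
  rewrite -(G_tele _ _ _ _ Kuge0 Kusum beta_gt0 beta_lt1 v i).
  by congr (G _ _ _ _ _ _); apply: funext => j; rewrite E.
rewrite Hv !(G_B _ _ _ _ Kuge0 Kusum beta_gt0 beta_lt1).
rewrite (G_x _ _ _ _ Kuge0 Kusum beta_gt0 beta_lt1 S c (actprob u false) i).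
rewrite (G_x _ _ _ _ Kuge0 Kusum beta_gt0 beta_lt1 (~: N1 :\: S) c (actprob u true) i).
rewrite -/g1 -/g2.
have -> : G p0 p1 u beta ru i = vcost p0 p1 h0 h1 beta u i by [].
ring.
Qed.
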